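(* Let $\mathsf{V}$ be the subvariety of $V(\mathsf{BCA})$ axiomatised, relative to $V(\mathsf{BCA})$, by the identity $J_2\neg x\approx\neg J_2x$. Then $\mathsf{V}$ coincides with the join $\mathsf{BA}\vee\mathsf{SL}$ in the lattice of subvarieties of $V(\mathsf{BCA})$.
   Context: $\mathbf{WK}^e$ is the three-element algebra on $\{0,\tfrac12,1\}$ of type $\langle\wedge,\vee,\neg,J_2,0,1\rangle$. Its operations are: - $\neg$ swaps $0,1$ and fixes $\tfrac12$; - $\wedge,\vee$ are Boolean on $\{0,1\}$ and return $\tfrac12$ whenever some argument is $\tfrac12$; - $J_2(1)=1$ and $J_2(\tfrac12)=J_2(0)=0$. $\mathsf{BCA}=ISP(\mathbf{WK}^e)$, and $V(\mathsf{BCA})=HSP(\mathbf{WK}^e)$ is the variety it generates. $\mathsf{BA}$ is the subvariety of $V(\mathsf{BCA})$ axiomatised relative to $V(\mathsf{BCA})$ by $J_2x\approx x$. $\mathsf{SL}$ is the subvariety axiomatised relative to $V(\mathsf{BCA})$ by $J_2x\approx 1$. *)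

(* Defs.v *)
Record Algebra := mkAlgebra {
  car : Type;
  a_meet : car -> car -> car;
  a_join : car -> car -> car;
  a_neg : car -> car;
  a_J2 : car -> car;
  a_zero : car;
  a_one : car }.

Definition is_hom (A B : Algebra) (f : car A -> car B) : Prop :=
  (forall x y, f (a_meet A x y) = a_meet B (f x) (f y)) /\
  (forall x y, f (a_join A x y) = a_join B (f x) (f y)) /\
  (forall x, f (a_neg A x) = a_neg B (f x)) /\
  (forall x, f (a_J2 A x) = a_J2 B (f x)) /\
  f (a_zero A) = a_zero B /\
  f (a_one A) = a_one B.

Definition injective {X Y : Type} (f : X -> Y) : Prop :=
  forall x y, f x = f y -> x = y.
Definition surjective {X Y : Type} (f : X -> Y) : Prop :=
  forall y, exists x, f x = y.

Definition prodAlg (I : Type) (B : I -> Algebra) : Algebra :=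
  {| car := forall i, car (B i);
     a_meet := fun x y i => a_meet (B i) (x i) (y i);
     a_join := fun x y i => a_join (B i) (x i) (y i);
     a_neg := fun x i => a_neg (B i) (x i);
     a_J2 := fun x i => a_J2 (B i) (x i);
     a_zero := fun i => a_zero (B i);
     a_one := fun i => a_one (B i) |}.

Definition AlgClass := Algebra -> Prop.

Definition Hop (K : AlgClass) : AlgClass := fun A =>
  exists B f, K B /\ is_hom B A f /\ surjective f.
Definition Sop (K : AlgClass) : AlgClass := fun A =>
  exists B f, K B /\ is_hom A B f /\ injective f.
Definition Pop (K : AlgClass) : AlgClass := fun A =>
  exists (I : Type) (B : I -> Algebra) (f : car A -> car (prodAlg I B)),
    (forall i, K (B i)) /\ is_hom A (prodAlg I B) f /\ injective f /\ surjective f.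

Definition HSP (K : AlgClass) : AlgClass := Hop (Sop (Pop K)).

Definition is_variety (K : AlgClass) : Prop :=
  (forall A, Hop K A -> K A) /\ (forall A, Sop K A -> K A) /\
  (forall A, Pop K A -> K A).

Definition var_join (K1 K2 : AlgClass) : AlgClass := fun A =>
  forall W : AlgClass, is_variety W ->
    (forall B, K1 B -> W B) -> (forall B, K2 B -> W B) -> W A.

Inductive term : Type :=
  | tVar : nat -> term
  | tMeet : term -> term -> term
  | tJoin : term -> term -> term
  | tNeg : term -> term
  | tJ2 : term -> term
  | tZero : term
  | tOne : term.

Fixpoint eval (A : Algebra) (v : nat -> car A) (t : term) : car A :=
  match t with
  | tVar n => v n
  | tMeet s u => a_meet A (eval A v s) (eval A v u)
  | tJoin s u => a_join A (eval A v s) (eval A v u)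
  | tNeg s => a_neg A (eval A v s)
  | tJ2 s => a_J2 A (eval A v s)
  | tZero => a_zero A
  | tOne => a_one A
  end.

Definition satisfies (A : Algebra) (s t : term) : Prop :=
  forall v : nat -> car A, eval A v s = eval A v t.

(** The three-element algebra WK^e on {0, 1/2, 1}. *)
Inductive three : Type := T0 | Th | T1.

Definition wk_neg (x : three) : three :=
  match x with T0 => T1 | Th => Th | T1 => T0 end.
Definition wk_meet (x y : three) : three :=
  match x, y with
  | Th, _ | _, Th => Th
  | T1, T1 => T1
  | _, _ => T0
  end.
Definition wk_join (x y : three) : three :=
  match x, y with
  | Th, _ | _, Th => Th
  | T0, T0 => T0
  | _, _ => T1
  end.
Definition wk_J2 (x : three) : three :=
  match x with T1 => T1 | _ => T0 end.

Definition WKe : Algebra :=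
  {| car := three; a_meet := wk_meet; a_join := wk_join; a_neg := wk_neg;
     a_J2 := wk_J2; a_zero := T0; a_one := T1 |}.

Definition VBCA : AlgClass := HSP (fun A => A = WKe).

Definition rel_axiomatised (s t : term) : AlgClass := fun A =>
  VBCA A /\ satisfies A s t.

Definition x0 : term := tVar 0.

Definition BA : AlgClass := rel_axiomatised (tJ2 x0) x0.
Definition SL : AlgClass := rel_axiomatised (tJ2 x0) tOne.

Definition Vneg : AlgClass := rel_axiomatised (tJ2 (tNeg x0)) (tNeg (tJ2 x0)).

(* Main.v *)
Require Import Defs.
From Stdlib Require Import IndefiniteDescription ProofIrrelevance FunctionalExtensionality.

Definition cid := constructive_indefinite_description.


Lemma hM A B f : is_hom A B f -> forall x y, f (a_meet A x y) = a_meet B (f x) (f y).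
Proof. intros H; apply H. Qed.
Lemma hJ A B f : is_hom A B f -> forall x y, f (a_join A x y) = a_join B (f x) (f y).
Proof. intros H; apply H. Qed.
Lemma hN A B f : is_hom A B f -> forall x, f (a_neg A x) = a_neg B (f x).
Proof. intros H; apply H. Qed.
Lemma hT A B f : is_hom A B f -> forall x, f (a_J2 A x) = a_J2 B (f x).
Proof. intros H; apply H. Qed.
Lemma h0 A B f : is_hom A B f -> f (a_zero A) = a_zero B.
Proof. intros H; apply H. Qed.
Lemma h1 A B f : is_hom A B f -> f (a_one A) = a_one B.
Proof. intros H; apply H. Qed.

Lemma hom_comp A B C f g : is_hom A B f -> is_hom B C g -> is_hom A C (fun x => g (f x)).
Proof.
  intros Hf Hg; repeat split; intros;
  first [rewrite (hM _ _ _ Hf), (hM _ _ _ Hg) | rewrite (hJ _ _ _ Hf), (hJ _ _ _ Hg)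
        | rewrite (hN _ _ _ Hf), (hN _ _ _ Hg) | rewrite (hT _ _ _ Hf), (hT _ _ _ Hg)
        | rewrite (h0 _ _ _ Hf), (h0 _ _ _ Hg) | rewrite (h1 _ _ _ Hf), (h1 _ _ _ Hg)]; reflexivity.
Qed.

Lemma eval_hom A B f v t : is_hom A B f -> f (eval A v t) = eval B (fun n => f (v n)) t.
Proof.
  intros H; induction t; simpl; try reflexivity;
  first [rewrite (hM _ _ _ H) | rewrite (hJ _ _ _ H) | rewrite (hN _ _ _ H) | rewrite (hT _ _ _ H)
        | rewrite (h0 _ _ _ H) | rewrite (h1 _ _ _ H)]; congruence.
Qed.

Lemma eval_ext A v w t : (forall n, v n = w n) -> eval A v t = eval A w t.
Proof. intros H; induction t; simpl; congruence. Qed.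

Lemma eval_prod I B w t i : eval (prodAlg I B) w t i = eval (B i) (fun n => w n i) t.
Proof. induction t; simpl; try reflexivity; congruence. Qed.

Lemma sat_P I B s t : (forall i, satisfies (B i) s t) -> satisfies (prodAlg I B) s t.
Proof.
  intros H w; apply functional_extensionality_dep; intro i.
  rewrite !eval_prod; apply H.
Qed.

Lemma sat_S A B f s t : is_hom A B f -> injective f -> satisfies B s t -> satisfies A s t.
Proof.
  intros Hf Hi H v; apply Hi; rewrite !(eval_hom _ _ _ _ _ Hf); apply H.
Qed.

Lemma sat_H A B f s t : is_hom B A f -> surjective f -> satisfies B s t -> satisfies A s t.
Proof.
  intros Hf Hs H v.
  set (w := fun n => proj1_sig (cid _ _ (Hs (v n)))).
  assert (Hw : forall n, v n = f (w n)).
  { intro n; unfold w; destruct (cid _ _ (Hs (v n))); simpl; auto. }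
  rewrite (eval_ext _ _ _ s Hw), (eval_ext _ _ _ t Hw), <- !(eval_hom _ _ _ _ _ Hf).
  rewrite (H w); reflexivity.
Qed.

Lemma wk_sat A s t : VBCA A -> satisfies WKe s t -> satisfies A s t.
Proof.
  intros [B [f [HB [Hf Hsurj]]]] H.
  destruct HB as [C [g [HC [Hg Hginj]]]].
  destruct HC as [I [Bf [e [HBf [He [Hinj _]]]]]].
  apply (sat_H _ _ _ _ _ Hf Hsurj). apply (sat_S _ _ _ _ _ Hg Hginj).
  apply (sat_S _ _ _ _ _ He Hinj). apply sat_P. intro i; rewrite HBf; exact H.
Qed.

Definition Rcar (A : Algebra) (g : car A -> car A) := {x : car A | g x = x}.

Definition retract (A : Algebra) (g : car A -> car A) (gg : forall x, g (g x) = g x) : Algebra :=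
  {| car := Rcar A g;
     a_meet := fun a b => exist _ (g (a_meet A (proj1_sig a) (proj1_sig b))) (gg _);
     a_join := fun a b => exist _ (g (a_join A (proj1_sig a) (proj1_sig b))) (gg _);
     a_neg := fun a => exist _ (g (a_neg A (proj1_sig a))) (gg _);
     a_J2 := fun a => exist _ (g (a_J2 A (proj1_sig a))) (gg _);
     a_zero := exist _ (g (a_zero A)) (gg _);
     a_one := exist _ (g (a_one A)) (gg _) |}.

Definition rmap A g gg (x : car A) : car (retract A g gg) := exist _ (g x) (gg x).

Lemma R_eq A g (x y : Rcar A g) : proj1_sig x = proj1_sig y -> x = y.
Proof. destruct x, y; simpl; intros ->; f_equal; apply proof_irrelevance. Qed.

Lemma rmap_hom A g gg :
  (forall x y, g (a_meet A x y) = g (a_meet A (g x) (g y))) ->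
  (forall x y, g (a_join A x y) = g (a_join A (g x) (g y))) ->
  (forall x, g (a_neg A x) = g (a_neg A (g x))) ->
  (forall x, g (a_J2 A x) = g (a_J2 A (g x))) ->
  is_hom A (retract A g gg) (rmap A g gg) /\ surjective (rmap A g gg).
Proof.
  intros H1 H2 H3 H4; repeat split; intros; try (apply R_eq; simpl; auto).
  intros y; exists (proj1_sig y); apply R_eq; simpl; apply (proj2_sig y).
Qed.

Lemma VBCA_H A : Hop VBCA A -> VBCA A.
Proof.
  intros [B [f [[C [g [HC [Hg Hgs]]]] [Hf Hfs]]]].
  exists C, (fun x => f (g x)); split; [exact HC|split].
  - exact (hom_comp _ _ _ _ _ Hg Hf).
  - intros y; destruct (Hfs y) as [b Hb]; destruct (Hgs b) as [c Hc]; exists c; congruence.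
Qed.

Definition val2 {X} (x y : X) : nat -> X := fun n => match n with 0 => x | _ => y end.

Ltac wkid HA x y s t :=
  let H := fresh "W" in
  assert (H : eval _ (val2 x y) s = eval _ (val2 x y) t)
    by (apply (wk_sat _ s t HA); let v := fresh "v" in intro v; simpl; destruct (v 0), (v 1); reflexivity);
  simpl in H.

Definition x1 := tVar 1.

Lemma forward A : Vneg A -> var_join BA SL A.
Proof.
  intros [HA Hneg] W [WH [WS WP]] HBA HSL.
  assert (N : forall x, a_J2 A (a_neg A x) = a_neg A (a_J2 A x)) by (intro x; apply (Hneg (fun _ => x))).
  assert (gg1 : forall x, a_J2 A (a_J2 A x) = a_J2 A x).
  { intro x. wkid HA x x (tJ2 (tJ2 x0)) (tJ2 x0). exact W0. }
  set (A1 := retract A (a_J2 A) gg1).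
  destruct (rmap_hom A (a_J2 A) gg1) as [Hr1 Hs1].
  { intros x y. wkid HA x y (tJ2 (tMeet x0 x1)) (tJ2 (tMeet (tJ2 x0) (tJ2 x1))). exact W0. }
  { intros x y.
    wkid HA x y (tJoin x0 x1) (tNeg (tMeet (tNeg x0) (tNeg x1))).
    wkid HA x y (tJ2 (tMeet (tNeg x0) (tNeg x1))) (tMeet (tJ2 (tNeg x0)) (tJ2 (tNeg x1))).
    wkid HA x y (tJ2 (tJoin (tJ2 x0) (tJ2 x1))) (tNeg (tMeet (tNeg (tJ2 x0)) (tNeg (tJ2 x1)))).
    rewrite W0, N, W1, !N. exact (eq_sym W2). }
  { intros x. rewrite N, N, gg1. reflexivity. }
  { intros x. rewrite !gg1. reflexivity. }
  set (g2 := fun x => a_meet A x (a_zero A)).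
  assert (gg2 : forall x, g2 (g2 x) = g2 x).
  { intro x. wkid HA x x (tMeet (tMeet x0 tZero) tZero) (tMeet x0 tZero). exact W0. }
  set (A2 := retract A g2 gg2).
  destruct (rmap_hom A g2 gg2) as [Hr2 Hs2].
  { intros x y. wkid HA x y (tMeet (tMeet x0 x1) tZero) (tMeet (tMeet (tMeet x0 tZero) (tMeet x1 tZero)) tZero). exact W0. }
  { intros x y. wkid HA x y (tMeet (tJoin x0 x1) tZero) (tMeet (tJoin (tMeet x0 tZero) (tMeet x1 tZero)) tZero). exact W0. }
  { intros x. wkid HA x x (tMeet (tNeg x0) tZero) (tMeet (tNeg (tMeet x0 tZero)) tZero). exact W0. }
  { intros x. wkid HA x x (tMeet (tJ2 x0) tZero) (tMeet (tJ2 (tMeet x0 tZero)) tZero). exact W0. }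
  assert (VA1 : VBCA A1) by (apply VBCA_H; exists A, (rmap A _ gg1); auto).
  assert (VA2 : VBCA A2) by (apply VBCA_H; exists A, (rmap A _ gg2); auto).
  assert (BA1 : W A1).
  { apply HBA; split; auto. intro v; apply R_eq; simpl. destruct (v 0) as [a Ha]; simpl. rewrite Ha; exact Ha. }
  assert (SL2 : W A2).
  { apply HSL; split; auto. intro v; apply R_eq; simpl. unfold g2.
    wkid HA (proj1_sig (v 0)) (proj1_sig (v 0)) (tMeet (tJ2 x0) tZero) (tMeet tOne tZero). exact W0. }
  set (Bf := fun b : bool => if b then A1 else A2).
  set (F := fun x : car A => (fun b => if b as b' return car (Bf b') then rmap A _ gg1 x else rmap A _ gg2 x) : car (prodAlg bool Bf)).
  apply WS. exists (prodAlg bool Bf), F. split; [|split].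
  - apply WP. exists bool, Bf, (fun x => x). split; [|split; [|split]].
    + intros [|]; simpl; assumption.
    + repeat split.
    + intros a b H; exact H.
    + intros y; exists y; reflexivity.
  - repeat split; intros; apply functional_extensionality_dep; intros [|]; simpl;
      first [ apply Hr1 | apply Hr2 ].
  - intros x y Hxy.
    assert (E1 : F x true = F y true) by (rewrite Hxy; reflexivity).
    assert (E2 : F x false = F y false) by (rewrite Hxy; reflexivity).
    unfold F in E1, E2. apply (f_equal (@proj1_sig _ _)) in E1, E2. simpl in E1, E2.
    wkid HA x x x0 (tJoin (tJ2 x0) (tMeet x0 tZero)).
    wkid HA y y x0 (tJoin (tJ2 x0) (tMeet x0 tZero)).
    unfold g2 in E2. congruence.
Qed.

Definition K0 : AlgClass := fun A => A = WKe.

Lemma inj_comp {X Y Z} (f : X -> Y) (g : Y -> Z) : injective f -> injective g -> injective (fun x => g (f x)).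
Proof. intros Hf Hg x y H; apply Hf, Hg, H. Qed.

Definition Scar (A B C : Algebra) (f : car A -> car B) (h : car C -> car B) :=
  {c : car C | exists a, h c = f a}.

Lemma S_eq A B C f h (x y : Scar A B C f h) : proj1_sig x = proj1_sig y -> x = y.
Proof. destruct x, y; simpl; intros ->; f_equal; apply proof_irrelevance. Qed.

Definition subAlg A B C f h (Hf : is_hom A B f) (Hh : is_hom C B h) : Algebra.
Proof.
  refine {| car := Scar A B C f h;
     a_meet := fun a b => exist _ (a_meet C (proj1_sig a) (proj1_sig b)) _;
     a_join := fun a b => exist _ (a_join C (proj1_sig a) (proj1_sig b)) _;
     a_neg := fun a => exist _ (a_neg C (proj1_sig a)) _;
     a_J2 := fun a => exist _ (a_J2 C (proj1_sig a)) _;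
     a_zero := exist _ (a_zero C) _;
     a_one := exist _ (a_one C) _ |}.
  - destruct a as [a [x Hx]], b as [b [y Hy]]; exists (a_meet A x y); simpl.
    rewrite (hM _ _ _ Hf), (hM _ _ _ Hh); congruence.
  - destruct a as [a [x Hx]], b as [b [y Hy]]; exists (a_join A x y); simpl.
    rewrite (hJ _ _ _ Hf), (hJ _ _ _ Hh); congruence.
  - destruct a as [a [x Hx]]; exists (a_neg A x); simpl.
    rewrite (hN _ _ _ Hf), (hN _ _ _ Hh); congruence.
  - destruct a as [a [x Hx]]; exists (a_J2 A x); simpl.
    rewrite (hT _ _ _ Hf), (hT _ _ _ Hh); congruence.
  - exists (a_zero A); rewrite (h0 _ _ _ Hf), (h0 _ _ _ Hh); reflexivity.
  - exists (a_one A); rewrite (h1 _ _ _ Hf), (h1 _ _ _ Hh); reflexivity.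
Defined.

Lemma VBCA_S A : Sop VBCA A -> VBCA A.
Proof.
  intros [B [f [[C [h [HC [Hh Hhs]]]] [Hf Hfi]]]].
  destruct HC as [D [k [HD [Hk Hki]]]].
  set (S := subAlg A B C f h Hf Hh).
  set (p := fun c : car S => proj1_sig (cid _ _ (proj2_sig c))).
  assert (Hp : forall c : car S, h (proj1_sig c) = f (p c)).
  { intro c; unfold p; destruct (cid _ _ (proj2_sig c)); simpl; auto. }
  exists S, p; split; [|split].
  - exists D, (fun c : car S => k (proj1_sig c)); split; [exact HD|split].
    + repeat split; intros; simpl;
      first [apply (hM _ _ _ Hk) | apply (hJ _ _ _ Hk) | apply (hN _ _ _ Hk) | apply (hT _ _ _ Hk)
            | apply (h0 _ _ _ Hk) | apply (h1 _ _ _ Hk)].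
    + intros x y E; apply S_eq, Hki, E.
  - repeat split; intros; apply Hfi; rewrite <- Hp; simpl;
      first [rewrite (hM _ _ _ Hf), (hM _ _ _ Hh), !Hp | rewrite (hJ _ _ _ Hf), (hJ _ _ _ Hh), !Hp
            | rewrite (hN _ _ _ Hf), (hN _ _ _ Hh), !Hp | rewrite (hT _ _ _ Hf), (hT _ _ _ Hh), !Hp
            | rewrite (h0 _ _ _ Hf), (h0 _ _ _ Hh) | rewrite (h1 _ _ _ Hf), (h1 _ _ _ Hh)]; reflexivity.
  - intros a. destruct (Hhs (f a)) as [c Hc].
    assert (Ec : exists a', h c = f a') by (exists a; exact Hc).
    exists (exist _ c Ec). apply Hfi. rewrite <- Hp; simpl; exact Hc.
Qed.

Record VData (A : Algebra) : Type := {
  vC : Algebra; vh : car vC -> car A; vI : Type; vB : vI -> Algebra;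
  vk : car vC -> car (prodAlg vI vB);
  vhh : is_hom vC A vh; vhs : surjective vh;
  vkh : is_hom vC (prodAlg vI vB) vk; vki : injective vk;
  vBe : forall j, vB j = WKe }.

Definition getV A (H : VBCA A) : VData A.
Proof.
  destruct (cid _ _ H) as [C HC]. destruct (cid _ _ HC) as [h [HS [Hh Hs]]].
  destruct (cid _ _ HS) as [D HD]. destruct (cid _ _ HD) as [k [HP [Hk Hki]]].
  destruct (cid _ _ HP) as [I HI]. destruct (cid _ _ HI) as [Bf HBf].
  destruct (cid _ _ HBf) as [e [HBe [He [Hei _]]]].
  exact (Build_VData A C h I Bf (fun c => e (k c)) Hh Hs (hom_comp _ _ _ _ _ Hk He)
           (inj_comp _ _ Hki Hei) HBe).
Qed.

Lemma VBCA_P A : Pop VBCA A -> VBCA A.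
Proof.
  intros [I [B [e [HB [He [Hei Hes]]]]]].
  set (V := fun i => getV (B i) (HB i)).
  set (Cs := prodAlg I (fun i => vC _ (V i))).
  set (hs := fun (c : car Cs) => (fun i => vh _ (V i) (c i)) : car (prodAlg I B)).
  set (einv := fun y : car (prodAlg I B) => proj1_sig (cid _ _ (Hes y))).
  assert (Einv : forall y, e (einv y) = y).
  { intro y; unfold einv; destruct (cid _ _ (Hes y)); simpl; auto. }
  set (J := {i : I & vI _ (V i)}).
  set (Ds := prodAlg J (fun p => vB _ (V (projT1 p)) (projT2 p))).
  set (ks := fun (c : car Cs) => (fun p => vk _ (V (projT1 p)) (c (projT1 p)) (projT2 p)) : car Ds).
  exists Cs, (fun c => einv (hs c)). split; [|split].
  - exists Ds, ks. split; [|split].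
    + exists J, (fun p => vB _ (V (projT1 p)) (projT2 p)), (fun x => x).
      split; [intro p; apply vBe|split; [repeat split|split]].
      * intros a b H; exact H.
      * intros y; exists y; reflexivity.
    + repeat split; intros; apply functional_extensionality_dep; intro p; unfold ks; simpl;
      first [rewrite (hM _ _ _ (vkh _ (V (projT1 p)))) | rewrite (hJ _ _ _ (vkh _ (V (projT1 p))))
            | rewrite (hN _ _ _ (vkh _ (V (projT1 p)))) | rewrite (hT _ _ _ (vkh _ (V (projT1 p))))
            | rewrite (h0 _ _ _ (vkh _ (V (projT1 p)))) | rewrite (h1 _ _ _ (vkh _ (V (projT1 p))))];
      reflexivity.
    + intros x y E. apply functional_extensionality_dep; intro i.
      apply (vki _ (V i)). apply functional_extensionality_dep; intro j.
      exact (f_equal (fun z => z (existT _ i j)) E).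
  - assert (Hhs : is_hom Cs (prodAlg I B) hs).
    { repeat split; intros; apply functional_extensionality_dep; intro i; unfold hs; simpl;
      first [rewrite (hM _ _ _ (vhh _ (V i))) | rewrite (hJ _ _ _ (vhh _ (V i)))
            | rewrite (hN _ _ _ (vhh _ (V i))) | rewrite (hT _ _ _ (vhh _ (V i)))
            | rewrite (h0 _ _ _ (vhh _ (V i))) | rewrite (h1 _ _ _ (vhh _ (V i)))];
      reflexivity. }
    assert (Hei' : is_hom (prodAlg I B) A einv).
    { repeat split; intros; apply Hei; rewrite Einv;
      first [rewrite (hM _ _ _ He) | rewrite (hJ _ _ _ He) | rewrite (hN _ _ _ He)
            | rewrite (hT _ _ _ He) | rewrite (h0 _ _ _ He) | rewrite (h1 _ _ _ He)];
      rewrite ?Einv; reflexivity. }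
    exact (hom_comp _ _ _ _ _ Hhs Hei').
  - intros a.
    set (c := fun i => proj1_sig (cid _ _ (vhs _ (V i) (e a i)))).
    exists (c : car Cs). apply Hei. rewrite Einv.
    apply functional_extensionality_dep; intro i. unfold hs, c.
    destruct (cid _ _ (vhs _ (V i) (e a i))); simpl; auto.
Qed.

Lemma Vneg_variety : is_variety Vneg.
Proof.
  split; [|split].
  - intros A [B [f [[HB HBs] [Hf Hs]]]]. split.
    + apply VBCA_H. exists B, f; auto.
    + exact (sat_H _ _ _ _ _ Hf Hs HBs).
  - intros A [B [f [[HB HBs] [Hf Hi]]]]. split.
    + apply VBCA_S. exists B, f; auto.
    + exact (sat_S _ _ _ _ _ Hf Hi HBs).
  - intros A [I [B [e [HB [He [Hei Hes]]]]]]. split.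
    + apply VBCA_P. exists I, B, e. split; [intro i; apply HB|auto].
    + apply (sat_S _ _ _ _ _ He Hei). apply sat_P. intro i; apply HB.
Qed.

Theorem corollary4p14 :
  forall A : Algebra, Vneg A <-> var_join BA SL A.
Proof.
  intros A; split.
  - apply forward.
  - intros H. apply H.
    + exact Vneg_variety.
    + intros B [HB HBs]. split; auto. intros v. simpl.
      pose proof (HBs (fun _ => a_neg B (v 0))) as E1; pose proof (HBs v) as E2; simpl in E1, E2.
      rewrite E1, E2. reflexivity.
    + intros B [HB HBs]. split; auto. intros v. simpl.
      pose proof (HBs (fun _ => a_neg B (v 0))) as E1; pose proof (HBs v) as E2; simpl in E1, E2.
      rewrite E1, E2.
      wkid HB (v 0) (v 0) (tJ2 tZero) tZero.
      assert (E : a_zero B = a_one B) by (rewrite <- W; exact (HBs (fun _ => a_zero B))).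
      wkid HB (v 0) (v 0) (tNeg tOne) tZero. rewrite W0; exact (eq_sym E).
Qed.
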